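(* Let $(\rhd,\nu,\phi)$ and $(\rhd,\nu,\phi')$ be two persistent craving representations (same $\rhd$ and $\nu$) with associated random choice rules $p$ and $p'$. Let $x\in X$ and $y\in X\setminus\{x\}$ with $y\ne M(\rhd,X\setminus\{x\})$. Then $$p(y,X)-p(y,X\setminus\{x\})>p'(y,X)-p'(y,X\setminus\{x\})$$ if and only if $\phi(M(\rhd,X\setminus\{x\}),x)>\phi'(M(\rhd,X\setminus\{x\}),x)$.
   Context: $X$ is a finite set, $\mathcal{X}$ its nonempty subsets, $\mathcal{L}(X)$ its linear orders, $M(\succ,A)$ the $\succ$-maximal element of $A$, $N(x,A)=\{\succ: x\succ y\ \forall y\in A\setminus\{x\}\}$. Given a linear order $\rhd$, the craving preferences $\{\succ_x\}_{x\in X}$ are: $x\succ_x y$ for all $y\neq x$, and for $y,z\ne x$, $y\succ_x z$ iff $y\rhd z$. A distribution $\nu$ supported on $\{\succ_x\}$ is craving monotonic w.r.t. $\rhd$ if $x\rhd y$ implies $\nu(\succ_x)>\nu(\succ_y)>0$. A persistence function is $\phi:X^2\to[0,1)$ with $\phi(x,x)=0$, $\phi(x,y)>0$ for $x\ne y$. A persistent craving representation $(\rhd,\nu,\phi)$ (with $\nu$ craving monotonic) determines the transition function $t(x,\succ_y)=\phi(x,y)\delta_{\succ_y}+(1-\phi(x,y))\nu$, $t(x,\succ)=\nu$ for $\succ$ outside the support of $\nu$; for each $A\in\mathcal{X}$, $\nu_A$ is the unique stationary distribution of the chain $m_A(\succ,\succ')=t_{\succ'}(M(\succ,A),\succ)$,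 and the associated random choice rule is $p(x,A)=\sum_{\succ\in N(x,A)}\nu_A(\succ)$. *)

(* Defs.v *)
From HB Require Import structures.
From mathcomp Require Import all_boot all_order all_algebra.
Set Implicit Arguments. Unset Strict Implicit. Unset Printing Implicit Defensive.
Import Order.TTheory GRing.Theory Num.Theory.
Local Open Scope ring_scope.

Section Defs.
Variable T : finType.

(* A (strict) linear order on T, encoded by its graph: x ≻ y iff r (x, y). *)
Definition is_lorder (r : {ffun T * T -> bool}) : bool :=
  [&& [forall a, ~~ r (a, a)],
      [forall a, forall b, forall c, r (a, b) && r (b, c) ==> r (a, c)] &
      [forall a, forall b, (a != b) ==> r (a, b) || r (b, a)]].

Definition lorder := {r : {ffun T * T -> bool} | is_lorder r}.

Definition lrel (r : lorder) (a b : T) : bool := val r (a, b).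

(* M(≻, A): the ≻-maximal element of A (None only when A is empty). *)
Definition M (r : lorder) (A : {set T}) : option T :=
  [pick z in A | [forall w in A, (w != z) ==> lrel r z w]].

Definition N (x : T) (A : {set T}) : {set lorder} :=
  [set r : lorder | [forall w in A, (w != x) ==> lrel r x w]].

Definition crave_fun (rhd : lorder) (x : T) : {ffun T * T -> bool} :=
  [ffun ab : T * T => (ab.1 != ab.2) &&
     ((ab.1 == x) || ((ab.2 != x) && lrel rhd ab.1 ab.2))].

Lemma crave_is_lorder rhd x : is_lorder (crave_fun rhd x).
Proof.
rewrite /crave_fun /lrel; case: rhd => r /= Hr.
move: Hr => /and3P [/forallP irr /forallP tr /forallP tot].
apply/and3P; split.
- by apply/forallP => a; rewrite ffunE eqxx.
- apply/forallP => a; apply/forallP => b; apply/forallP => c.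
  rewrite !ffunE /=; apply/implyP => /andP [/andP [ab H1] /andP [bc H2]].
  have irrc : ~~ r (c, c) := irr c.
  have trabc : r (a, b) -> r (b, c) -> r (a, c).
    by move=> h1 h2; move: (tr a) => /forallP/(_ b)/forallP/(_ c); rewrite h1 h2.
  have [ax|ax] := eqVneq a x.
    subst a; have [cx|cx] := eqVneq c x.
      by subst c; move: H2; rewrite eqxx (negbTE bc).
    by rewrite ?eqxx /= ?orTb ?andbT 1?eq_sym.
  move: H1; rewrite (negbTE ax) /= => /andP [bx rab].
  move: H2; rewrite (negbTE bx) /= => /andP [cx rbc].
  have rac := trabc rab rbc.
  rewrite cx rac /= andbT; apply/eqP => ac; move: rac irrc; rewrite ac.
  by move=> ->.
- apply/forallP => a; apply/forallP => b; apply/implyP => ab.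
  have ba : b != a by rewrite eq_sym.
  rewrite !ffunE /= ab ba /=.
  have [ax|ax] := eqVneq a x => //=.
  have [bx|bx] := eqVneq b x => //=.
  by move: (tot a) => /forallP/(_ b); rewrite ab.
Qed.

Definition crave (rhd : lorder) (x : T) : lorder :=
  exist _ (crave_fun rhd x) (crave_is_lorder rhd x).

Variable R : realFieldType.

Definition craving_monotonic (rhd : lorder) (nu : lorder -> R) : Prop :=
  [/\ (forall r, 0 <= nu r), \sum_r nu r = 1,
      (forall r, nu r != 0 -> exists x, r = crave rhd x) &
      (forall x y, lrel rhd x y -> nu (crave rhd y) < nu (crave rhd x) /\
                                   0 < nu (crave rhd y))].

Definition persistence (phi : T -> T -> R) : Prop :=
  forall x y, [/\ 0 <= phi x y, phi x y < 1, phi x x = 0 &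
                  (x != y -> 0 < phi x y)].

Definition persistent_craving_rep (rhd : lorder) (nu : lorder -> R)
    (phi : T -> T -> R) : Prop :=
  craving_monotonic rhd nu /\ persistence phi.

(* transition function t(x, ≻) (a distribution over L(X)), evaluated at ≻' *)
Definition trans (rhd : lorder) (nu : lorder -> R) (phi : T -> T -> R)
    (x : T) (r r' : lorder) : R :=
  match [pick y | r == crave rhd y] with
  | Some y => phi x y * (r' == r)%:R + (1 - phi x y) * nu r'
  | None => nu r'
  end.

Definition mA rhd nu phi (A : {set T}) (r r' : lorder) : R :=
  match M r A with
  | Some z => trans rhd nu phi z r r'
  | None => 0
  end.

Definition stationary (m : lorder -> lorder -> R) (pi : lorder -> R) : Prop :=
  [/\ (forall r, 0 <= pi r), \sum_r pi r = 1 &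
      forall r', pi r' = \sum_r pi r * m r r'].

Definition rcr_of rhd nu phi (p : T -> {set T} -> R) : Prop :=
  forall A : {set T}, A != set0 ->
    exists pi, stationary (mA rhd nu phi A) pi /\
               forall x, p x A = \sum_(r in N x A) pi r.

End Defs.

(* Main.v *)
Require Import Defs.
From HB Require Import structures.
From mathcomp Require Import all_boot all_order all_algebra.
From mathcomp Require Import zify ring lra.
Set Implicit Arguments. Unset Strict Implicit. Unset Printing Implicit Defensive.
Import Order.TTheory GRing.Theory Num.Theory.
Local Open Scope ring_scope.

Lemma lrel_irr (T : finType) (r : lorder T) a : ~~ lrel r a a.
Proof. case: r => r Hr; have /and3P [/forallP H _ _] := Hr; exact: H. Qed.

Lemma lrel_trans (T : finType) (r : lorder T) a b c :
  lrel r a b -> lrel r b c -> lrel r a c.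
Proof.
case: r => r Hr; have /and3P [_ /forallP H _] := Hr; rewrite /lrel /= => h1 h2.
by move: (H a) => /forallP/(_ b)/forallP/(_ c); rewrite h1 h2.
Qed.

Lemma lrel_tot (T : finType) (r : lorder T) a b :
  a != b -> lrel r a b || lrel r b a.
Proof.
case: r => r Hr; have /and3P [_ _ /forallP H] := Hr; rewrite /lrel /= => ab.
by move: (H a) => /forallP/(_ b); rewrite ab.
Qed.

Lemma lrel_asym (T : finType) (r : lorder T) a b :
  lrel r a b -> lrel r b a -> False.
Proof. by move=> h1 h2; move: (lrel_irr r a); rewrite (lrel_trans h1 h2). Qed.

Lemma M_eq (T : finType) (r : lorder T) (A : {set T}) c :
  c \in A -> (forall w, w \in A -> w != c -> lrel r c w) -> M r A = Some c.
Proof.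
move=> cA Hc; rewrite /M; case: pickP => [c' /andP [c'A /forall_inP H]|/(_ c)].
  have [//|ne] := eqVneq c' c; first by move->.
  exfalso; apply: (lrel_asym (Hc c' c'A ne)).
  by move: (H c cA); rewrite eq_sym ne.
rewrite cA /=; case/negP; apply/forall_inP => w wA; apply/implyP; exact: Hc.
Qed.

Lemma M_some (T : finType) (r : lorder T) (A : {set T}) :
  A != set0 -> exists c, M r A = Some c.
Proof.
case/set0Pn => c0 c0A.
pose S c := [set w in A | lrel r c w].
have [c cA cmax] := @arg_maxnP T c0 (mem A) (fun c => #|S c|) c0A.
exists c; apply: M_eq => // w wA wc.
case/orP: (lrel_tot r (wc : w != c)) => // rwc; exfalso.
have : (#|S c| < #|S w|)%N.
  have sub : c |: S c \subset S w.
    apply/subsetP => v; rewrite in_setU1 => /orP [/eqP->|].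
      by rewrite inE rwc andbT.
    rewrite inE => /andP [vA rcv].
    by rewrite inE vA (lrel_trans rwc rcv).
  apply: leq_trans (subset_leq_card sub).
  by rewrite cardsU1 inE (negbTE (lrel_irr r c)) andbF.
have := cmax w wA; rewrite /geq /=; lia.
Qed.

Lemma crave_rel (T : finType) (rhd : lorder T) w a b :
  lrel (crave rhd w) a b = (a != b) && ((a == w) || ((b != w) && lrel rhd a b)).
Proof. by rewrite /lrel /= ffunE. Qed.

Lemma crave_inj (T : finType) (rhd : lorder T) : injective (crave rhd).
Proof.
move=> a b E; apply/eqP; apply/negPn/negP => ab.
have := crave_rel rhd a a b; rewrite E crave_rel ab eqxx /= => /esym.
by rewrite eq_sym (negbTE ab) /= eqxx.
Qed.

Lemma pick_crave (T : finType) (rhd : lorder T) v :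
  [pick w | crave rhd v == crave rhd w] = Some v.
Proof.
case: pickP => [w /eqP/crave_inj -> //|/(_ v)]; by rewrite eqxx.
Qed.

Lemma M_crave_in (T : finType) (rhd : lorder T) (A : {set T}) w :
  w \in A -> M (crave rhd w) A = Some w.
Proof.
move=> wA; apply: M_eq => // v _ vw.
by rewrite crave_rel eqxx eq_sym vw.
Qed.


Definition sfun (T : finType) (R : realFieldType) (rhd : lorder T)
  (phi : T -> T -> R) (A : {set T}) (r : lorder T) : R :=
  match [pick w | r == crave rhd w] with
  | Some w => match M r A with Some c => phi c w | None => 0 end
  | None => 0 end.

Lemma mA_eq (T : finType) (R : realFieldType) (rhd : lorder T) nu
  (phi : T -> T -> R) (A : {set T}) r r' : A != set0 ->
  mA rhd nu phi A r r' = sfun rhd phi A r * (r' == r)%:R + (1 - sfun rhd phi A r) * nu r'.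
Proof.
move=> A0; rewrite /mA /sfun /trans; have [c ->] := M_some r A0.
by case: pickP => [w _|_] //; rewrite mul0r add0r subr0 mul1r.
Qed.

Lemma stat_eq (T : finType) (R : realFieldType) (rhd : lorder T) nu
  (phi : T -> T -> R) (A : {set T}) pi : A != set0 ->
  stationary (mA rhd nu phi A) pi -> forall r',
  pi r' * (1 - sfun rhd phi A r') =
    nu r' * \sum_r pi r * (1 - sfun rhd phi A r).
Proof.
move=> A0 [_ _ H] r'.
have E : pi r' = pi r' * sfun rhd phi A r' + nu r' * \sum_r pi r * (1 - sfun rhd phi A r).
  rewrite {1}H.
  under eq_bigr => r _ do rewrite mA_eq // mulrDr.
  rewrite big_split /=; congr (_ + _).
    rewrite (bigD1 r') //= eqxx mulr1 big1 ?addr0 // => r /negbTE.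
    by rewrite eq_sym => ->; rewrite !mulr0.
  rewrite mulr_sumr; apply: eq_bigr => r _; ring.
by rewrite mulrBr mulr1 {1}E; ring.
Qed.

Lemma alg (R : realFieldType) (a b q q' C C' : R) : 0 < a -> 0 < b -> 0 <= q -> q < 1 -> 0 <= q' -> q' < 1 ->
  1 - q = C * (1 - q + a * q) -> 1 - q' = C' * (1 - q' + a * q') ->
  (b - b * C' < b - b * C <-> q' < q).
Proof.
move=> a0 b0 q0 q1 q0' q1' E E'.
have d0 : 0 < 1 - q + a * q by nra.
have d0' : 0 < 1 - q' + a * q' by nra.
have key : (C < C') = (q' < q).
  have -> : C = (1 - q) / (1 - q + a * q) by rewrite {1}E mulfK ?gt_eqF.
  have -> : C' = (1 - q') / (1 - q' + a * q') by rewrite {1}E' mulfK ?gt_eqF.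
  rewrite ltr_pdivrMr // mulrAC ltr_pdivlMr //.
  apply/idP/idP => H; nra.
have -> : (b - b * C' < b - b * C) = (C < C').
  by rewrite ltrD2l ltrN2 ltr_pM2l.
by rewrite key.
Qed.


Lemma sfun_lt1 (T : finType) (R : realFieldType) (rhd : lorder T)
  (phi : T -> T -> R) A r : persistence phi -> sfun rhd phi A r < 1.
Proof.
move=> Hp; rewrite /sfun; case: pickP => [w _|_]; last by rewrite ltr01.
case: (M r A) => [c|]; last by rewrite ltr01.
by case: (Hp c w).
Qed.

Lemma pi_zero (T : finType) (R : realFieldType) (rhd : lorder T) nu
  (phi : T -> T -> R) (A : {set T}) pi r : persistence phi -> A != set0 ->
  stationary (mA rhd nu phi A) pi -> nu r = 0 -> pi r = 0.
Proof.
move=> Hp A0 St nu0; have := stat_eq A0 St r; rewrite nu0 mul0r => /eqP.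
rewrite mulf_eq0 => /orP [/eqP //|]; rewrite subr_eq0 => /eqP E.
by have := sfun_lt1 rhd A r Hp; rewrite -E ltxx.
Qed.

Lemma crave_in_N (T : finType) (rhd : lorder T) y (A : {set T}) : crave rhd y \in N y A.
Proof.
by rewrite inE; apply/forall_inP => w _; apply/implyP => wy; rewrite crave_rel eqxx eq_sym wy.
Qed.

Lemma notN (T : finType) (rhd : lorder T) y w (A : {set T}) :
  w \in A -> w != y -> crave rhd w \notin N y A.
Proof.
move=> wA wy; rewrite inE; apply/negP => /forall_inP/(_ w wA); rewrite wy /=.
by rewrite crave_rel eqxx eq_sym wy /= (negbTE wy).
Qed.

Lemma sum_N (T : finType) (R : realFieldType) (rhd : lorder T)
  (nu pi : lorder T -> R) y (A : {set T}) :
  (forall r, nu r != 0 -> exists x, r = crave rhd x) ->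
  (forall r, nu r = 0 -> pi r = 0) ->
  (forall w, w != y -> crave rhd w \in N y A -> pi (crave rhd w) = 0) ->
  \sum_(r in N y A) pi r = pi (crave rhd y).
Proof.
move=> Hs Hz Hw; rewrite (bigD1 (crave rhd y)) ?crave_in_N //= big1 ?addr0 //.
move=> r /andP [rN ry]; have [/eqP/Hz //|/Hs [w Ew]] := boolP (nu r == 0).
subst r; apply: Hw => //; apply: contraNneq ry => ->; exact: eqxx.
Qed.


Lemma facts (T : finType) (R : realFieldType) (rhd : lorder T)
  (nu : lorder T -> R) (phi : T -> T -> R) (p : T -> {set T} -> R) (x y z : T) :
  persistent_craving_rep rhd nu phi -> rcr_of rhd nu phi p -> y != x ->
  M rhd (~: [set x]) = Some z -> y != z ->
  p y setT = nu (crave rhd y) /\ exists C, p y (~: [set x]) = nu (crave rhd y) * C /\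
   1 - phi z x = C * (1 - phi z x + nu (crave rhd x) * phi z x).
Proof.
case=> [[nu0 nu1 nus num] Hp] Hr yx Mz yz.
have Hz' : forall r, nu r = 0 -> forall A pi, A != set0 ->
   stationary (mA rhd nu phi A) pi -> pi r = 0.
  by move=> r nr A pi A0 St; exact: pi_zero Hp A0 St nr.
split.
  have A0 : [set: T] != set0 by apply/set0Pn; exists x; rewrite in_setT.
  have [pi [St Hpi]] := Hr _ A0.
  have s0 : forall r, sfun rhd phi setT r = 0.
    move=> r; rewrite /sfun; case: pickP => [w /eqP -> | _] //.
    by rewrite M_crave_in ?in_setT //; case: (Hp w w).
  have E := stat_eq A0 St.
  set K := \sum_r _ in E.
  have E' : forall r, pi r = nu r * K by move=> r; rewrite -E s0 subr0 mulr1.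
  have K1 : K = 1.
    case: St => _ S1 _; move: S1; under eq_bigr => r _ do rewrite E'.
    by rewrite -mulr_suml nu1 mul1r.
  rewrite Hpi (sum_N (rhd := rhd) (nu := nu)) //.
  - by rewrite E' K1 mulr1.
  - by move=> r nr; apply: Hz' nr _ _ A0 St.
  - by move=> w wy wN; move: (notN rhd (in_setT w) wy); rewrite wN.
set A := ~: [set x].
have zA : z \in A /\ (forall w, w \in A -> w != z -> lrel rhd z w).
  move: Mz; rewrite /M; case: pickP => // z' /andP [zA /forall_inP H] [<-].
  by split => // w wA wz; move: (H w wA); rewrite wz.
case: zA => zA zmax.
have yA : y \in A by rewrite !inE.
have A0 : A != set0 by apply/set0Pn; exists y.
have [pi [St Hpi]] := Hr _ A0.
have Mx : M (crave rhd x) A = Some z.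
  apply: M_eq => // w wA wz; rewrite crave_rel eq_sym wz /=.
  move: (zA) (wA); rewrite !inE => /negbTE -> -> /=; exact: zmax.
have sE : forall r, sfun rhd phi A r = if r == crave rhd x then phi z x else 0.
  move=> r; rewrite /sfun; case: pickP => [w /eqP -> | H].
    have [-> | wx] := eqVneq w x; first by rewrite eqxx Mx.
    rewrite M_crave_in; last by rewrite !inE.
    case: (Hp w w) => _ _ -> _.
    by rewrite (inj_eq (@crave_inj _ rhd)) (negbTE wx).
  case: eqP => // rx; by move: (H x); rewrite rx eqxx.
have E := stat_eq A0 St.
set K := \sum_r _ in E.
have E' : forall r, r != crave rhd x -> pi r = nu r * K.
  by move=> r rx; rewrite -E sE (negbTE rx) subr0 mulr1.
exists K; split.
  rewrite Hpi (sum_N (rhd := rhd) (nu := nu)) //.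
  - rewrite E' // (inj_eq (@crave_inj _ rhd)) //.
  - by move=> r nr; apply: Hz' nr _ _ A0 St.
  - move=> w wy wN; have [wx|wx] := eqVneq w x.
      exfalso; subst w; move: wN; rewrite inE => /forall_inP/(_ z zA).
      rewrite eq_sym yz /= crave_rel yz (negbTE yx) /=.
      move: (zA); rewrite !inE => -> /= ryz.
      by apply: (lrel_asym ryz); apply: zmax => //; rewrite eq_sym.
    have wA : w \in A by rewrite !inE.
    by move: (notN rhd wA wy); rewrite wN.
have Ex := E (crave rhd x); rewrite sE eqxx in Ex.
case: St => _ S1 _.
rewrite (bigD1 (crave rhd x)) //= in S1.
rewrite (eq_bigr (fun r => nu r * K)) in S1; last by move=> r rx; exact: E'.
rewrite -mulr_suml in S1.
have S2 : \sum_(i | i != crave rhd x) nu i = 1 - nu (crave rhd x).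
  by have := nu1; rewrite (bigD1 (crave rhd x)) //= => <-; rewrite addrC addrK.
rewrite S2 in S1.
have Pcx : pi (crave rhd x) = 1 - (1 - nu (crave rhd x)) * K.
  by apply: (addIr ((1 - nu (crave rhd x)) * K)); rewrite S1 subrK.
apply/eqP; rewrite -subr_eq0.
have -> : 1 - phi z x - K * (1 - phi z x + nu (crave rhd x) * phi z x) =
  pi (crave rhd x) * (1 - phi z x) - nu (crave rhd x) * K by rewrite Pcx; ring.
by rewrite Ex subrr.
Qed.


Theorem proposition2 (R : realFieldType) (T : finType) (rhd : lorder T)
    (nu : lorder T -> R) (phi phi' : T -> T -> R) (p p' : T -> {set T} -> R)
    (x y z : T) :
  persistent_craving_rep rhd nu phi ->
  persistent_craving_rep rhd nu phi' ->
  rcr_of rhd nu phi p ->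
  rcr_of rhd nu phi' p' ->
  y != x ->
  M rhd (~: [set x]) = Some z ->
  y != z ->
  (p' y setT - p' y (~: [set x]) < p y setT - p y (~: [set x]) <->
   phi' z x < phi z x).
Proof.
move=> H1 H2 Hr1 Hr2 yx Mz yz.
have [P1 [C [P2 E]]] := facts H1 Hr1 yx Mz yz.
have [P1' [C' [P2' E']]] := facts H2 Hr2 yx Mz yz.
rewrite P1 P2 P1' P2'.
case: H1 => [[_ _ _ num] Hp]; case: H2 => [_ Hp'].
have xy : x != y by rewrite eq_sym.
have [a0 b0] : 0 < nu (crave rhd x) /\ 0 < nu (crave rhd y).
  case/orP: (lrel_tot rhd xy) => h; have [lt pos] := num _ _ h;
    split => //; exact: lt_trans pos lt.
case: (Hp z x) => q0 q1 _ _; case: (Hp' z x) => q0' q1' _ _.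
exact: alg a0 b0 q0 q1 q0' q1' E E'.
Qed.
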